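(* For every directed space $X$, there is the equality $\vec{\mathrm{Sp}}(\vec{\Omega}(X))=X$. Consequently the category of directed spaces is isomorphic to a full reflective subcategory of the category of multipointed $d$-spaces.
   Context: Let $\mathbf{Top}$ be the category of $\Delta$-generated spaces (or of $\Delta$-Hausdorff $\Delta$-generated spaces). For $\ell>0$ let $\mu_\ell(t)=t/\ell$, $\mu_\ell:[0,\ell]\to[0,1]$. $\mathcal{M}(\ell,\ell')$ is the set of non-decreasing surjective continuous maps $[0,\ell]\to[0,\ell']$; $\mathcal{I}(\ell)$ is the set of non-decreasing continuous maps $[0,1]\to[0,\ell]$ (constant maps allowed). The Moore composition of $\gamma_1:[0,\ell_1]\to U$, $\gamma_2:[0,\ell_2]\to U$ with $\gamma_1(\ell_1)=\gamma_2(0)$ is $\gamma_1*\gamma_2:[0,\ell_1+\ell_2]\to U$, equal to $\gamma_1(t)$ on $[0,\ell_1]$ and $\gamma_2(t-\ell_1)$ on $[\ell_1,\ell_1+\ell_2]$; the normalized composition of $\gamma_1,\gamma_2:[0,1]\to U$ is $(\gamma_1\mu_{1/2})*(\gamma_2\mu_{1/2})$. A multipointed $d$-space is a triple $X=(|X|,X^0,\mathbb{P}^{\mathrm{top}}X)$: a space, a subset of states, and a set of continuous maps $[0,1]\to|X|$ (execution paths) with endpoints in $X^0$, closed under precomposition by $\mathcal{M}(1,1)$ and under normalized composition; maps are continuous maps preserving states and execution paths. A directed space is a pair $Y=(|Y|,d(Y))$ with $d(Y)$ a set of continuous maps $[0,1]\to|Y|$ containing all constant paths, closed under normalized composition and under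 precomposition by $\mathcal{I}(1)$; morphisms are continuous maps preserving directed paths. $\vec{\mathrm{Sp}}$ sends a multipointed $d$-space $X$ to the directed space $(|X|,d(X))$ where $d(X)$ consists of all constant paths and all Moore compositions $(\gamma_1\phi_1\mu_{\ell_1})*\dots*(\gamma_n\phi_n\mu_{\ell_n})$ with $n\ge1$, $\ell_i>0$, $\sum\ell_i=1$, $\gamma_i$ execution paths and $\phi_i\in\mathcal{I}(1)$. $\vec{\Omega}$ sends a directed space $(|Y|,d(Y))$ to the multipointed $d$-space $(|Y|,|Y|,d(Y))$. $\vec{\mathrm{Sp}}$ is left adjoint to $\vec{\Omega}$, both acting as identity on underlying maps. *)

(* Defs.v *)
From HB Require Import structures.
From mathcomp Require Import all_boot all_order all_algebra.
From mathcomp Require Import all_classical all_reals all_analysis.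
Set Implicit Arguments. Unset Strict Implicit. Unset Printing Implicit Defensive.
Import Order.TTheory GRing.Theory Num.Theory.
Import numFieldNormedType.Exports.
Local Open Scope classical_set_scope.
Local Open Scope ring_scope.

Section Defs.
Variable R : realType.

Local Notation I01 := (set_type (`[0, 1]%classic : set R)).

Lemma clamp_in01 (t : R) : Num.min 1 (Num.max 0 t) \in (`[0, 1]%classic : set R).
Proof.
apply/mem_set => /=; rewrite in_itv /=; apply/andP; split.
  by rewrite le_min ler01 le_max lexx.
by rewrite ge_min lexx.
Qed.

(* clamp t = the point of [0,1] closest to t (only used for t in [0,1] up to
   the endpoints of the subintervals, where it is the identity). *)
Definition clamp (t : R) : I01 := @exist R (fun x => x \in (`[0, 1]%classic : set R)) _ (clamp_in01 t).

Definition dpath (T : Type) := I01 -> T.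

Definition p0 : I01 := clamp 0.
Definition p1 : I01 := clamp 1.

Definition reparamM11 (phi : I01 -> I01) : Prop :=
  continuous phi /\ (forall s t : I01, val s <= val t -> val (phi s) <= val (phi t))
  /\ (forall u : I01, exists s, phi s = u).

Definition reparamI1 (phi : I01 -> I01) : Prop :=
  continuous phi /\ (forall s t : I01, val s <= val t -> val (phi s) <= val (phi t)).

Definition normcomp (T : Type) (g1 g2 : dpath T) : dpath T :=
  fun u => if val u <= 2^-1 then g1 (clamp (2 * val u))
           else g2 (clamp (2 * val u - 1)).

(* Multipointed d-spaces (X^0 = X0, P^top X = P). *)
Definition is_multipointed_dspace (T : topologicalType) (X0 : set T)
    (P : set (dpath T)) : Prop :=
  [/\ (forall g, P g -> continuous g),
      (forall g, P g -> X0 (g p0) /\ X0 (g p1)),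
      (forall g phi, P g -> reparamM11 phi -> P (g \o phi)) &
      (forall g1 g2, P g1 -> P g2 -> g1 p1 = g2 p0 -> P (normcomp g1 g2))].

Definition is_directed_space (T : topologicalType) (d : set (dpath T)) : Prop :=
  [/\ (forall g, d g -> continuous g),
      (forall x : T, d (fun _ => x)),
      (forall g1 g2, d g1 -> d g2 -> g1 p1 = g2 p0 -> d (normcomp g1 g2)) &
      (forall g phi, d g -> reparamI1 phi -> d (g \o phi))].

(* Moore composition (gamma_1 phi_1 mu_{l_1}) * ... * (gamma_n phi_n mu_{l_n}),
   as a function of t in [0, l_1 + ... + l_n]. *)
Fixpoint moore (T : Type) (s : seq (dpath T * (I01 -> I01) * R)) (t : R) : option T :=
  match s with
  | [::] => None
  | [:: (g, phi, l)] => Some (g (phi (clamp (t / l))))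
  | (g, phi, l) :: s' =>
      if t <= l then Some (g (phi (clamp (t / l)))) else moore s' (t - l)
  end.

Fixpoint moore_composable (T : Type) (s : seq (dpath T * (I01 -> I01) * R)) : Prop :=
  match s with
  | (g, phi, _) :: (((g', phi', _) :: _) as s') =>
      g (phi p1) = g' (phi' p0) /\ moore_composable s'
  | _ => True
  end.

Fixpoint all_prop (A : Type) (p : A -> Prop) (s : seq A) : Prop :=
  if s is x :: s' then p x /\ all_prop p s' else True.

(* d(X) for X a multipointed d-space given by (T, X0, P): the set of directed
   paths of Sp(X). *)
Definition dSp (T : topologicalType) (X0 : set T) (P : set (dpath T)) : set (dpath T) :=
  [set g | (exists x : T, g = fun _ => x) \/
    exists (s : seq (dpath T * (I01 -> I01) * R)) (x0 : T),
      [/\ s != [::],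
          all_prop (fun e => [/\ P e.1.1, reparamI1 e.1.2 & 0 < e.2]) s,
          \sum_(e <- s) e.2 = 1,
          moore_composable s &
          g = fun u => odflt x0 (moore s (val u))]].

(* Omega: a directed space (T, d) gives the multipointed d-space (T, [set: T], d). *)

Definition dspace_map (T U : topologicalType) (dT : set (dpath T)) (dU : set (dpath U))
    (f : T -> U) : Prop :=
  continuous f /\ (forall g, dT g -> dU (f \o g)).

Definition mpd_map (T U : topologicalType) (X0 : set T) (P : set (dpath T))
    (Y0 : set U) (Q : set (dpath U)) (f : T -> U) : Prop :=
  [/\ continuous f, (forall x, X0 x -> Y0 (f x)) & (forall g, P g -> Q (f \o g))].

End Defs.

(* Main.v *)
Require Import Defs.
From HB Require Import structures.
From mathcomp Require Import all_boot all_order all_algebra.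
From mathcomp Require Import all_classical all_reals all_analysis.
From mathcomp Require Import ring lra.
Set Implicit Arguments. Unset Strict Implicit. Unset Printing Implicit Defensive.
Import Order.TTheory GRing.Theory Num.Theory.
Import numFieldNormedType.Exports.
Local Open Scope classical_set_scope.
Local Open Scope ring_scope.

Section Helpers.
Variable R : realType.
Local Notation I01 := (set_type (`[0, 1]%classic : set R)).

Lemma contmin (T : topologicalType) (f g : T -> R) : continuous f -> continuous g ->
  continuous (fun x => Num.min (f x) (g x)).
Proof. move=> cf cg x; exact: (@continuous_min R T f g x (cf x) (cg x)). Qed.

Lemma contmax (T : topologicalType) (f g : T -> R) : continuous f -> continuous g ->
  continuous (fun x => Num.max (f x) (g x)).
Proof. move=> cf cg x; exact: (@continuous_max R T f g x (cf x) (cg x)). Qed.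

Lemma contD (T : topologicalType) (f g : T -> R) : continuous f -> continuous g ->
  continuous (fun x => f x + g x).
Proof. move=> cf cg x; exact: (@continuousD R R^o T f g x (cf x) (cg x)). Qed.

Lemma contM (T : topologicalType) (f g : T -> R) : continuous f -> continuous g ->
  continuous (fun x => f x * g x).
Proof. move=> cf cg x; exact: (@continuousM R T f g x (cf x) (cg x)). Qed.

Lemma contC (T : topologicalType) (c : R) : continuous (fun _ : T => c).
Proof. move=> x; exact: cvg_cst. Qed.

Lemma contI : continuous (fun x : R => x).
Proof. move=> x; exact: cvg_id. Qed.

Definition Fpl (a b c x : R) := Num.min (a * x) (2^-1) + Num.max 0 (b * x + c).

Lemma contF (a b c : R) : continuous (Fpl a b c).
Proof.
rewrite /Fpl.
apply: contD.
  apply: contmin; last exact: contC.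
  by apply: contM; [exact: contC | exact: contI].
apply: contmax; first exact: contC.
apply: contD; last exact: contC.
by apply: contM; [exact: contC | exact: contI].
Qed.

Lemma val_cont : continuous (fun u : I01 => val u).
Proof. exact: initial_continuous. Qed.

Lemma valclamp (t : R) : 0 <= t -> t <= 1 -> val (clamp t) = t.
Proof. by move=> h0 h1 /=; rewrite (max_r h0) (min_r h1). Qed.

Lemma val01 (u : I01) : 0 <= val u /\ val u <= 1.
Proof.
case: u => x /= /set_mem /=; rewrite in_itv /= => /andP[]; by split.
Qed.

Lemma clampK (u : I01) : clamp (val u) = u.
Proof. apply: val_inj; have [h0 h1] := val01 u; exact: valclamp. Qed.

Lemma clamp_cont (T : topologicalType) (f : T -> R) : continuous f ->
  continuous (fun u => clamp (f u)).
Proof.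
move=> cf. apply: (@continuous_comp_initial _ _ _ (@set_val R `[0,1]%classic)).
have -> : (set_val \o fun u => clamp (f u)) = fun u => Num.min 1 (Num.max 0 (f u)).
  by apply: funext => u.
apply: contmin => [y|]; first exact: cvg_cst.
by apply: contmax => // y; exact: cvg_cst.
Qed.

Lemma clamp_mono (x y : R) : x <= y -> val (clamp x) <= val (clamp y).
Proof. by move=> h /=; apply: le_min2 => //; apply: le_max2. Qed.

End Helpers.
Section Main.
Variable R : realType.
Local Notation I01 := (set_type (`[0, 1]%classic : set R)).
Variable T : topologicalType.
Variable d : set (dpath R T).
Hypothesis hd : is_directed_space d.

Definition goodE (e : dpath R T * (I01 -> I01) * R) := [/\ d e.1.1, reparamI1 e.1.2 & 0 < e.2].

Lemma sum_pos (s : seq (dpath R T * (I01 -> I01) * R)) :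
  s != [::] -> all_prop goodE s -> 0 < \sum_(e <- s) e.2.
Proof.
elim: s => [//|e s IH] _ /= [he hs]; case: he => _ _ he.
rewrite big_cons; case: s IH hs => [|e' s'] IH hs.
  by rewrite big_nil addr0.
by apply: addr_gt0 => //; exact: IH.
Qed.

Lemma moore_head g phi l (s : seq (dpath R T * (I01 -> I01) * R)) :
  0 <= l -> moore ((g, phi, l) :: s) 0 = Some (g (phi (p0 R))).
Proof. by move=> hl; case: s => [|e s] /=; rewrite ?hl mul0r. Qed.

Lemma moore_in_d (x0 : T) (s : seq (dpath R T * (I01 -> I01) * R)) :
  s != [::] -> all_prop goodE s -> moore_composable s ->
  d (fun u => odflt x0 (moore s ((\sum_(e <- s) e.2) * val u))).
Proof.
case: hd => _ hcst hcomp hrep.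
elim: s => [//|[[g phi] l] s IH] _ /= [he hs]; case: he => /= dg rphi hl.
case: s IH hs => [|[[g' phi'] l'] s''] IH hs.
  move=> _; rewrite big_seq1 /=.
  have -> : (fun u : I01 => g (phi (clamp (l * val u / l)))) = g \o phi.
    apply: funext => u; rewrite /= mulrC mulrA mulVf ?mul1r ?clampK //.
    by rewrite gt_eqF.
  exact: hrep.
move=> /= [hglue hcs].
set s' := (g', phi', l') :: s''.
have hL' : 0 < \sum_(e <- s') e.2 by apply: sum_pos.
have dh := IH isT hs hcs.
set L' := \sum_(e <- s') e.2 in hL' dh *.
set h := (fun u : I01 => odflt x0 (moore s' (L' * val u))) in dh.
rewrite big_cons /=.
set L := l + L'.
pose a := L / (2 * l). pose b := L / (2 * L'). pose c := - (l / (2 * L')).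
pose psi := fun u : I01 => clamp (Fpl a b c (val u)).
have hl'0 : 0 < l' by case: hs => -[].
have hL : 0 < L by rewrite /L; lra.
have ha : 0 <= a by rewrite /a divr_ge0 // ?ltW //; lra.
have hb : 0 <= b by rewrite /b divr_ge0 // ?ltW //; lra.
have rpsi : reparamI1 psi.
  split.
    apply: clamp_cont => u; move: (continuous_comp (@val_cont R u) (@contF R a b c _)); exact.
  move=> u v huv; apply: clamp_mono; rewrite /Fpl; apply: lerD.
    by apply: le_min2 => //; exact: ler_wpM2l.
  by apply: le_max2 => //; rewrite lerD2r; exact: ler_wpM2l.
have dgp : d (g \o phi) := hrep _ _ dg rphi.
have hglue' : (g \o phi) (p1 R) = h (p0 R).
  have vp0 : val (p0 R) = 0 by apply: valclamp; rewrite ?ler01.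
  by rewrite /h vp0 mulr0 moore_head ?ltW.
have := hrep _ psi (hcomp _ _ dgp dh hglue') rpsi.
suff -> : (fun u : I01 => odflt x0 (if L * val u <= l then Some (g (phi (clamp (L * val u / l))))
            else moore s' (L * val u - l))) = normcomp (g \o phi) h \o psi by [].
apply: funext => u.
have [hx0 hx1] := val01 u.
set x := val u.
have ea : a * x = (L * x) / (2 * l) by rewrite /a mulrAC.
have eb : b * x + c = (L * x - l) / (2 * L').
  by rewrite /b /c; field; rewrite ?mulf_neq0 ?gt_eqF.
rewrite /comp /normcomp /psi.
cbv beta.
case: (leP (L * x) l) => ht.
  have hF : Fpl a b c x = L * x / (2 * l).
    rewrite /Fpl (@min_l _ _ (a * x)); last first.
      by rewrite ea ler_pdivrMr ?mulr_gt0 //; lra.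
    rewrite (@max_l _ _ 0); last by rewrite eb ler_pdivrMr ?mulr_gt0 // mul0r; lra.
    by rewrite addr0 ea.
  have hF0 : 0 <= L * x / (2 * l) by rewrite divr_ge0 ?mulr_ge0 //; lra.
  have hF1 : L * x / (2 * l) <= 2^-1 by rewrite ler_pdivrMr ?mulr_gt0 //; lra.
  rewrite hF valclamp //; last by lra.
  rewrite hF1 /=.
  do 3 f_equal; field; rewrite ?gt_eqF //.
have hF : Fpl a b c x = 2^-1 + (L * x - l) / (2 * L').
  rewrite /Fpl (@min_r _ _ (a * x)); last first.
    by rewrite ea ler_pdivlMr ?mulr_gt0 //; lra.
  rewrite (@max_r _ _ 0); last by rewrite eb ler_pdivlMr ?mulr_gt0 // mul0r; lra.
  by rewrite eb.
have hLx : L * x <= L by rewrite ler_piMr // ltW.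
have hG0 : 0 < (L * x - l) / (2 * L') by rewrite divr_gt0 ?mulr_gt0 //; lra.
have hG1 : (L * x - l) / (2 * L') <= 2^-1 by rewrite ler_pdivrMr ?mulr_gt0 //; have hLd : L = l + L' by []; lra.
rewrite hF valclamp; [|lra|lra].
rewrite (_ : (2^-1 + _ <= 2^-1) = false); last by apply/negbTE; rewrite -ltNge; lra.
rewrite /h.
have e2 : 2 * (2^-1 + (L * x - l) / (2 * L')) - 1 = (L * x - l) / L'.
  by field; rewrite gt_eqF.
rewrite e2 valclamp; last first.
  by rewrite ler_pdivrMr // mul1r; have hLd : L = l + L' by []; lra.
  by rewrite divr_ge0 //; lra.
congr (odflt x0 (moore s' _)); field; rewrite ?gt_eqF //.
Qed.
End Main.

Unset Implicit Arguments. Set Strict Implicit.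
Local Close Scope ring_scope.

Theorem theorem3p6 (R : realType) :
  (* Sp(Omega(X)) = X for every directed space X = (T, d) *)
  (forall (T : topologicalType) (d : set (dpath R T)),
      is_directed_space d -> dSp [set: T] d = d) /\
  (* Omega is fully faithful: maps Omega X -> Omega Y are exactly maps X -> Y *)
  (forall (T U : topologicalType) (dT : set (dpath R T)) (dU : set (dpath R U)),
      is_directed_space dT -> is_directed_space dU ->
      forall f : T -> U,
        mpd_map [set: T] dT [set: U] dU f <-> dspace_map dT dU f).
Proof.
split.
  move=> T d hd; apply/seteqP; split => g.
    case=> [[x ->]|[s [x0 [hne hall hsum hcomp ->]]]].
      by case: hd => _ hc _ _; exact: hc.
    have := moore_in_d hd x0 hne hall hcomp.
    rewrite hsum.
    suff -> : (fun u : set_type (`[0%R, 1%R]%classic : set R) => odflt x0 (moore s (1%R * val u)))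
       = (fun u => odflt x0 (moore s (val u))) by [].
    by apply: funext => u; rewrite mul1r.
  move=> dg; right; exists [:: (g, id, 1%R)], (g (p0 R)); split => //.
  - split => //; split => //=.
    + by split => // x; exact: cvg_id.
  - by rewrite big_seq1.
  - by apply: funext => u /=; rewrite divr1 clampK.
move=> T U dT dU _ _ f; split.
  by case=> cf _ hp; split.
by case=> cf hp; split.
Qed.
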